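(* Let $3\le k\le n-1$ and let $T$ be a tree attaining the maximum value of $M_2$ over $\mathcal{CT}_{n,k}$. If $T$ contains a pendent vertex adjacent to a branching vertex, then $T$ contains no pendent path of length greater than $2$.
   Context: A chemical tree is a tree with maximum degree at most $4$. A pendent vertex has degree $1$; a branching vertex has degree greater than $2$. A pendent path is a path $u_0\cdots u_r$ ($r\ge1$) with $u_0$ pendent, $u_r$ branching and all internal vertices of degree $2$; its length is $r$. A segment of a tree is a path of positive length neither of whose end vertices has degree $2$ and all of whose internal vertices have degree $2$. $\mathcal{CT}_{n,k}$ is the class of all $n$-vertex chemical trees with exactly $k$ segments. $M_2(G)=\sum_{uv\in E(G)}d_ud_v$, where $d_v$ is the degree of $v$. *)

(* Defs.v *)
From mathcomp Require Import all_boot.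
Set Implicit Arguments. Unset Strict Implicit. Unset Printing Implicit Defensive.

Section Defs.
Variable n : nat.
Implicit Types (e : rel 'I_n).

Definition deg e (v : 'I_n) : nat := #|[set w | e v w]|.

Definition simple_graph e : Prop := symmetric e /\ irreflexive e.

Definition connected e : Prop := forall x y : 'I_n, connect e x y.

Definition acyclic e : Prop :=
  forall c : seq 'I_n, uniq c -> 3 <= size c -> ~~ cycle e c.

Definition is_tree e : Prop := [/\ simple_graph e, connected e & acyclic e].

Definition chemical_tree e : Prop := is_tree e /\ forall v, deg e v <= 4.

Definition path_deg2_internal e (p : seq 'I_n) : bool :=
  if p is x :: q then
    [&& q != [::], uniq p, path e x q &
        all (fun v => (v == x) || (v == last x q) || (deg e v == 2)) p]
  else false.

(* segment: neither end vertex has degree 2; oriented canonically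
   (first end < last end) so each segment is represented exactly once *)
Definition is_segment e (p : seq 'I_n) : bool :=
  if p is x :: q then
    [&& path_deg2_internal e p, deg e x != 2, deg e (last x q) != 2 &
        (x < last x q)%N]
  else false.

Definition num_segments_eq e (k : nat) : Prop :=
  exists S : seq (seq 'I_n),
    [/\ uniq S, (forall p, p \in S = is_segment e p) & size S = k].

Definition CT e (k : nat) : Prop := chemical_tree e /\ num_segments_eq e k.

Definition M2 e : nat :=
  \sum_(u : 'I_n) \sum_(v : 'I_n | (u < v)%N && e u v) deg e u * deg e v.

(* pendent path u0 ... ur (r >= 1): u0 pendent, ur branching, internal deg 2;
   its length is r = size p - 1 *)
Definition is_pendent_path e (p : seq 'I_n) : bool :=
  if p is x :: q then
    [&& path_deg2_internal e p, deg e x == 1 & 2 < deg e (last x q)]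
  else false.

End Defs.

(* Main.v *)
Require Import Defs.
From mathcomp Require Import all_boot zify.
Set Implicit Arguments. Unset Strict Implicit. Unset Printing Implicit Defensive.

Definition ch n (e : rel 'I_n) (s : seq 'I_n) : bool :=
  if s is x :: q then [&& path_deg2_internal e s, deg e x != 2 & deg e (last x q) != 2] else false.
Definition wk n (e : rel 'I_n) (s : seq 'I_n) : bool :=
  if s is x :: q then path_deg2_internal e s && (deg e (last x q) != 2) else false.
Definition canon n (s : seq 'I_n) : seq 'I_n :=
  if s is x :: q then (if (x < last x q)%N then s else rev s) else s.

Lemma deg1_eq n (e : rel 'I_n) x y z : deg e x = 1 -> e x y -> e x z -> y = z.
Proof.
rewrite /deg => /eqP /cards1P [c Hc] hy hz.
have : y \in [set w | e x w] by rewrite inE.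
have : z \in [set w | e x w] by rewrite inE.
by rewrite Hc !inE => /eqP -> /eqP ->.
Qed.

Lemma deg2_eq n (e : rel 'I_n) y x z z' : deg e y = 2 -> e y x -> e y z -> e y z' ->
  x != z -> x != z' -> z = z'.
Proof.
rewrite /deg (cardsD1 x) inE => hd hx hz hz' nxz nxz'.
rewrite hx /= add1n in hd; case: hd => hd.
have /cards1P [c Hc] : #|[set w | e y w] :\ x| == 1 by rewrite hd.
have : z \in [set w | e y w] :\ x by rewrite !inE eq_sym nxz hz.
have : z' \in [set w | e y w] :\ x by rewrite !inE eq_sym nxz' hz'.
by rewrite Hc !inE => /eqP -> /eqP ->.
Qed.

Lemma interior n (e : rel 'I_n) x q y : symmetric e -> path e x q -> uniq (x :: q) ->
  y \in q -> y != last x q ->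
  exists a b, [/\ a \in x :: q, b \in x :: q, a != b, e y a & e y b].
Proof.
move=> sym hp hu hy hl.
case/splitPr: hy hp hu hl => l r.
rewrite cat_path last_cat /= => /andP [_ /andP [ha hr]].
case: r hr => [|b r] /=; first by rewrite eqxx.
move=> /andP [hb _] hu _.
exists (last x l), b; split.
- by move: (mem_last x l); rewrite !in_cons mem_cat => /orP [->|->] //; rewrite orbT.
- by rewrite in_cons mem_cat !in_cons eqxx !orbT.
- apply/eqP => eab. move: hu => /andP [hx]. rewrite cat_uniq => /and3P [_ /hasPn H _].
  have := H b. rewrite !inE eqxx orbT => /(_ isT) hbl.
  move: (mem_last x l); rewrite eab in_cons (negbTE hbl) orbF => /eqP ebx.
  by move: hx; rewrite -ebx mem_cat !in_cons eqxx !orbT.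
- by rewrite sym.
- exact hb.
Qed.

Lemma deg1_not_interior n (e : rel 'I_n) x q y : symmetric e -> path e x q -> uniq (x :: q) ->
  y \in q -> y != last x q -> deg e y = 1 -> False.
Proof.
move=> sym hp hu hy hl hd.
have [a [b [_ _ nab ha hb]]] := interior sym hp hu hy hl.
by move/eqP: nab; apply; apply: deg1_eq hd ha hb.
Qed.

Lemma deg2_interior n (e : rel 'I_n) x q y z : symmetric e -> path e x q -> uniq (x :: q) ->
  y \in q -> y != last x q -> deg e y = 2 -> e y z -> z \in x :: q.
Proof.
move=> sym hp hu hy hl hd hz.
have [a [b [ina inb nab ha hb]]] := interior sym hp hu hy hl.
case: (eqVneq a z) => [<- //|naz].
by rewrite -(deg2_eq hd ha hb hz nab naz).
Qed.

Lemma ch_deg2_mem n (e : rel 'I_n) s y z : symmetric e -> ch e s -> y \in s ->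
  deg e y = 2 -> e y z -> z \in s.
Proof.
case: s => [|x q] //= sym; rewrite /ch /path_deg2_internal => /and3P [/and4P [_ hu hp _] hx hl].
rewrite inE => /orP [/eqP ->|hy] hd; first by rewrite hd in hx.
apply: (deg2_interior sym hp hu hy _ hd).
by apply/eqP => E; rewrite -E hd in hl.
Qed.

Lemma wk_mid n (e : rel 'I_n) x y z c : wk e [:: x, y, z & c] -> deg e y = 2.
Proof.
rewrite /wk /path_deg2_internal => /andP [/and4P [_ hu _ ha] _].
move: ha => /and3P [_ hy _].
move: hu => /= /andP [hx /andP [hy' _]].
have nyx : (y == x) = false.
  by apply/negbTE; apply: contraNneq hx => ->; rewrite inE eqxx.
have nyl : (y == last z c) = false.
  by apply/negbTE; apply: contraNneq hy' => ->; exact: mem_last.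
by move: hy; rewrite /= nyx nyl /= => /eqP.
Qed.

Lemma wk_end n (e : rel 'I_n) x y : wk e [:: x; y] -> deg e y != 2.
Proof. by rewrite /wk => /andP [_ ->]. Qed.

Lemma wk_tail n (e : rel 'I_n) x y z c : wk e [:: x, y, z & c] -> wk e [:: y, z & c].
Proof.
rewrite /wk /path_deg2_internal => /andP [/and4P [_ hu hp ha] hl].
move: hu => /= /andP [hx hu]. move: hp => /= /andP [_ hp].
rewrite hu hp /=. rewrite /= in hl. rewrite hl andbT.
have H : all (fun v => (v == y) || (v == last z c) || (deg e v == 2)) [:: y, z & c].
  apply/allP => v hv. move/allP: ha => /(_ v). rewrite in_cons hv orbT => /(_ isT).
  have -> : (v == x) = false by apply/negbTE; apply: contraNneq hx => <-.
  by rewrite /= => /orP [->|->]; rewrite ?orbT.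
exact H.
Qed.

Lemma wk_facts n (e : rel 'I_n) x y z c : wk e [:: x, y, z & c] -> [/\ e x y, e y z & x != z].
Proof.
rewrite /wk /path_deg2_internal => /andP [/and4P [_ hu hp _] _].
move: hp => /= /and3P [-> -> _]; split => //.
move: hu => /= /andP [hx _]; apply: contraNneq hx => ->; by rewrite !inE eqxx orbT.
Qed.

Lemma walk_uniq n (e : rel 'I_n) a : forall x y b, symmetric e ->
  wk e [:: x, y & a] -> wk e [:: x, y & b] -> a = b.
Proof.
elim: a => [|z a IH] x y b sym ha hb.
- case: b hb => [//|z b] hb. have := wk_mid hb. by move: (wk_end ha) => /eqP.
- case: b hb => [|z' b] hb.
    have := wk_mid ha. by move: (wk_end hb) => /eqP.
  have hd := wk_mid ha.
  have [hxy hyz nxz] := wk_facts ha.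
  have [_ hyz' nxz'] := wk_facts hb.
  have ezz : z = z' by apply: (deg2_eq hd _ hyz hyz' nxz nxz'); rewrite sym.
  subst z'. congr (_ :: _). exact: IH sym (wk_tail ha) (wk_tail hb).
Qed.

Lemma rev_cons_last (T : Type) (x : T) q : rev (x :: q) = last x q :: rev (belast x q).
Proof. by rewrite lastI rev_rcons. Qed.

Lemma last_rev_belast (T : Type) (x : T) q : last (last x q) (rev (belast x q)) = x.
Proof. case: q => [|y q] //=. by rewrite rev_cons last_rcons. Qed.

Lemma pdi_rev n (e : rel 'I_n) x q : symmetric e -> path_deg2_internal e (x :: q) ->
  path_deg2_internal e (last x q :: rev (belast x q)).
Proof.
move=> sym. rewrite /path_deg2_internal => /and4P [hq hu hp ha].
apply/and4P; split.
- by rewrite -size_eq0 size_rev size_belast size_eq0.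
- by rewrite -rev_cons_last rev_uniq.
- have H : (fun z => e^~ z) =2 e by move=> a b; exact: sym.
  by rewrite rev_path (eq_path H).
- rewrite last_rev_belast -rev_cons_last all_rev.
  apply: sub_all ha => v /=. by move=> /orP [/orP [->|->]|->]; rewrite ?orbT.
Qed.

Lemma ch_rev n (e : rel 'I_n) x q : symmetric e -> ch e (x :: q) ->
  ch e (last x q :: rev (belast x q)).
Proof.
move=> sym; rewrite /ch => /and3P [hp hx hl].
by rewrite pdi_rev // hl last_rev_belast hx.
Qed.

Lemma ch_ends n (e : rel 'I_n) x q : ch e (x :: q) -> x != last x q.
Proof.
rewrite /ch /path_deg2_internal => /and3P [/and4P [hq hu _ _] _ _].
case: q hq hu => [//|y q] _ /= /andP [hx _].
by apply: contraNneq hx => ->; exact: mem_last.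
Qed.

Lemma seg_ch n (e : rel 'I_n) s : is_segment e s -> ch e s.
Proof. by case: s => [//|x q]; rewrite /is_segment /ch => /and4P [-> -> -> _]. Qed.

Lemma seg_canon n (e : rel 'I_n) s : is_segment e s -> canon s = s.
Proof. by case: s => [//|x q]; rewrite /is_segment /canon => /and4P [_ _ _ ->]. Qed.

Lemma canon_seg n (e : rel 'I_n) s : symmetric e -> ch e s -> is_segment e (canon s).
Proof.
case: s => [//|x q] sym hc.
rewrite /canon. case: ifP => hlt.
  by move: hc; rewrite /ch /is_segment hlt => /and3P [-> -> ->].
rewrite rev_cons_last.
have hc' := ch_rev sym hc.
move: hc'; rewrite /ch /is_segment => /and3P [-> -> ->] /=.
rewrite last_rev_belast.
have := ch_ends hc. move: hlt. 
move: (last x q) => y hlt hne.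
have : (nat_of_ord x != nat_of_ord y) by [].
lia.
Qed.

Lemma canon_rev n (e : rel 'I_n) x q : ch e (x :: q) ->
  canon (last x q :: rev (belast x q)) = canon (x :: q).
Proof.
move=> hc. have hne := ch_ends hc.
rewrite /canon last_rev_belast -rev_cons_last revK.
case: ifP => h1; case: ifP => h2 //.
  move: h1 h2 hne; move: (last x q) => y h1 h2 hne.
  have : (nat_of_ord x != nat_of_ord y) by []. lia.
move: h1 h2 hne; move: (last x q) => y h1 h2 hne.
have : (nat_of_ord x != nat_of_ord y) by []. lia.
Qed.

Lemma ch_wk n (e : rel 'I_n) s : ch e s -> wk e s.
Proof. by case: s => [//|x q]; rewrite /ch /wk => /and3P [-> _ ->]. Qed.

Lemma ch_head_case n (e : rel 'I_n) x y a q : symmetric e -> deg e x = 1 ->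
  ch e [:: x, y & a] -> ch e (x :: q) -> x :: q = [:: x, y & a].
Proof.
move=> sym hd ht hs.
case: q hs => [|z q] hs.
  by move: hs; rewrite /ch /path_deg2_internal => /and3P [/and4P [] ].
have hz : e x z by move: hs; rewrite /ch /path_deg2_internal => /and3P [/and4P [_ _ /= /andP [] ] ].
have hy : e x y by move: ht; rewrite /ch /path_deg2_internal => /and3P [/and4P [_ _ /= /andP [] ] ].
have ezy := deg1_eq hd hz hy. subst z.
by rewrite (walk_uniq sym (ch_wk hs) (ch_wk ht)).
Qed.

Lemma seg_from_leaf n (e : rel 'I_n) x y a s : symmetric e -> deg e x = 1 ->
  ch e [:: x, y & a] -> is_segment e s -> x \in s -> s = canon [:: x, y & a].
Proof.
move=> sym hd ht hs hx.
have hcs := seg_ch hs.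
case: s hs hcs hx => [//|h q] hs hcs hx.
have : (x == h) || (x == last h q).
  move: hcs; rewrite /ch /path_deg2_internal => /and3P [/and4P [_ _ _ /allP ha] _ _].
  by move: (ha x hx); rewrite hd /= orbF.
case/orP => /eqP E.
- subst h. by rewrite -(ch_head_case sym hd ht hcs) (seg_canon hs).
- have hr := ch_rev sym hcs. rewrite -E in hr.
  have := ch_head_case sym hd ht hr => <-.
  by rewrite {1}E (canon_rev hcs) (seg_canon hs).
Qed.

Lemma seg_transfer n (e1 e2 : rel 'I_n) s : {in s &, e1 =2 e2} ->
  {in s, deg e1 =1 deg e2} -> is_segment e1 s = is_segment e2 s.
Proof.
case: s => [//|x q] He Hd. rewrite /is_segment /path_deg2_internal.
have Hall : all (mem (x :: q)) (x :: q) by apply/allP.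
rewrite (eq_in_path He Hall) (Hd x) ?mem_head // (Hd (last x q)) ?mem_last //.
rewrite (@eq_in_all _ _ (fun v => (v == x) || (v == last x q) || (deg e2 v == 2))) //.
by move=> v hv /=; rewrite Hd.
Qed.

Definition Rs n (e : rel 'I_n) (u : 'I_n) : nat :=
  \sum_(v : 'I_n) (if e u v then deg e u * deg e v else 0).

Lemma M2_sym n (e : rel 'I_n) : symmetric e -> irreflexive e ->
  2 * M2 e = \sum_(u : 'I_n) Rs e u.
Proof.
move=> sym irr.
have E : forall u, Rs e u =
    \sum_(v : 'I_n) (if (u < v)%N && e u v then deg e u * deg e v else 0)
  + \sum_(v : 'I_n) (if (v < u)%N && e u v then deg e u * deg e v else 0).
  move=> u; rewrite /Rs -big_split /=; apply: eq_bigr => v _.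
  case E1: (e u v); last by rewrite !andbF.
  rewrite !andbT. case: (ltngtP u v) => h //=; rewrite ?addn0 ?add0n //.
  have huv : u = v by apply: val_inj.
  by rewrite huv irr in E1.
rewrite (eq_bigr _ (fun u _ => E u)) big_split /=.
have E2 : \sum_(i : 'I_n) \sum_(j : 'I_n) (if (j < i)%N && e i j then deg e i * deg e j else 0)
  = M2 e.
  rewrite exchange_big /M2; apply: eq_bigr => j _. rewrite [RHS]big_mkcond /=; apply: eq_bigr => i _.
  by rewrite sym mulnC.
have E3 : \sum_(i : 'I_n) \sum_(j : 'I_n) (if (i < j)%N && e i j then deg e i * deg e j else 0)
  = M2 e.
  by rewrite /M2; apply: eq_bigr => j _; rewrite [RHS]big_mkcond.
by rewrite E2 E3 mul2n addnn.
Qed.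

Lemma sum_if1 n (P : pred 'I_n) (f : 'I_n -> nat) a :
  (forall v, P v = (v == a)) -> \sum_(v : 'I_n) (if P v then f v else 0) = f a.
Proof.
move=> H. rewrite (bigD1 a) //= H eqxx big1 ?addn0 // => v hv.
by rewrite H (negbTE hv).
Qed.

Lemma sum_if2 n (P : pred 'I_n) (f : 'I_n -> nat) a b : a != b ->
  (forall v, P v = (v == a) || (v == b)) -> \sum_(v : 'I_n) (if P v then f v else 0) = f a + f b.
Proof.
move=> nab H. rewrite (bigD1 a) //= H eqxx /= (bigD1 b) /=; last by rewrite eq_sym.
rewrite H eqxx orbT big1 ?addn0 //. move=> v /andP [hva hvb].
by rewrite H (negbTE hva) (negbTE hvb).
Qed.

Lemma sum_one n (P : pred 'I_n) (F : 'I_n -> nat) a : P a ->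
  (forall u, P u -> u != a -> F u = 0) -> \sum_(u | P u) F u = F a.
Proof.
move=> Pa H. rewrite (bigD1 a) //= big1 ?addn0 // => u /andP [hu hua]. exact: H.
Qed.

Lemma sum3 n (F : 'I_n -> nat) a b c : a != b -> a != c -> b != c ->
  \sum_(u : 'I_n) F u = F a + F b + F c + \sum_(u | (u != a) && (u != b) && (u != c)) F u.
Proof.
move=> nab nac nbc.
rewrite (bigD1 a) //= (bigD1 b) /=; last by rewrite eq_sym.
rewrite (bigD1 c) /=; last by rewrite eq_sym nac eq_sym nbc.
by rewrite !addnA.
Qed.

Lemma deg_ext n (e1 e2 : rel 'I_n) x : (forall y, e1 x y = e2 x y) -> deg e1 x = deg e2 x.
Proof. move=> H; rewrite /deg; apply: eq_card => y; by rewrite !inE H. Qed.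

Lemma deg_one n (e : rel 'I_n) x a : (forall y, e x y = (y == a)) -> deg e x = 1.
Proof.
move=> H; rewrite /deg (_ : [set y | e x y] = [set a]) ?cards1 //.
by apply/setP => y; rewrite !inE H.
Qed.

Lemma deg_two n (e : rel 'I_n) x a b : (forall y, e x y = (y == a) || (y == b)) -> a != b ->
  deg e x = 2.
Proof.
move=> H nab; rewrite /deg (_ : [set y | e x y] = [set a; b]) ?cards2 ?nab //.
by apply/setP => y; rewrite !inE H.
Qed.

Lemma mem_canon n (s : seq 'I_n) : canon s =i s.
Proof. case: s => [//|x q] y; rewrite /canon; case: ifP => // _; by rewrite mem_rev. Qed.

Arguments canon : simpl never.
Definition modT n (T : rel 'I_n) (u0 w : 'I_n) : rel 'I_n :=
  fun x y => (T x y && (x != u0) && (y != u0)) || ((x == u0) && (y == w)) || ((x == w) && (y == u0)).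

Theorem lemma4 (n k : nat) (T : rel 'I_n) :
  3 <= k <= n - 1 ->
  CT T k ->
  (forall T' : rel 'I_n, CT T' k -> M2 T' <= M2 T) ->
  (exists u v : 'I_n, [/\ deg T u = 1, T u v & 2 < deg T v]) ->
  forall p : seq 'I_n, is_pendent_path T p -> size p - 1 <= 2.
Proof.
move=> hk [[[[sym irr] conn acyc] hdeg4] hseg] hmax [w [v [hw hwv hv]]] p hpp.
rewrite leqNgt; apply/negP => hlong.
case: p hpp hlong => [|u0 [|u1 [|u2 [|u3 r]]]] hpp hlong; move: hlong => //= _.
move: hpp; rewrite /is_pendent_path => /and3P [hpdi /eqP d0 dr].
rewrite /= in dr.
have chP : ch T [:: u0, u1, u2, u3 & r] by rewrite /ch hpdi d0 /= neq_ltn dr orbT.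
have wkP := ch_wk chP.
have d1 : deg T u1 = 2 := wk_mid wkP.
have d2 : deg T u2 = 2 := wk_mid (wk_tail wkP).
have [e01 e12 _] := wk_facts wkP.
have [_ e23 n13] := wk_facts (wk_tail wkP).
have hu : uniq [:: u0, u1, u2, u3 & r] by move: hpdi => /and4P [].
have n12 : u1 != u2 by apply/eqP => E; move: hu; rewrite E /= !inE eqxx /= !andbF.
have nd : forall x y, deg T x != deg T y -> x != y by move=> x y; apply: contraNneq => ->.
have n01 : u0 != u1 by apply: nd; rewrite d0 d1.
have nv0 : v != u0 by apply: nd; rewrite d0; move: hv; clear; lia.
have n02 : u0 != u2 by apply: nd; rewrite d0 d2.
have nv1 : v != u1 by apply: nd; rewrite d1; move: hv; clear; lia.
have nv2 : v != u2 by apply: nd; rewrite d2; move: hv; clear; lia.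
have nw1 : w != u1 by apply: nd; rewrite d1 hw.
have nw2 : w != u2 by apply: nd; rewrite d2 hw.
have nwv : w != v by apply: nd; rewrite hw; move: hv; clear; lia.
have nr0 : last u3 r != u0 by apply: nd; rewrite d0; move: dr; clear; lia.
have nr1 : last u3 r != u1 by apply: nd; rewrite d1; move: dr; clear; lia.
have nrw : last u3 r != w by apply: nd; rewrite hw; move: dr; clear; lia.
have nw0 : w != u0.
  apply/eqP => E; rewrite E in hwv. by move: nv1; rewrite (deg1_eq d0 hwv e01) eqxx.
have e0w : (u0 == w) = false by rewrite eq_sym (negbTE nw0).
have N0 : forall y, T u0 y = (y == u1).
  by move=> y; apply/idP/eqP => [h|->//]; exact: deg1_eq d0 h e01.
have N0' : forall y, T y u0 = (y == u1) by move=> y; rewrite sym N0.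
have N1 : forall y, T u1 y = (y == u0) || (y == u2).
  move=> y; apply/idP/idP => [h|/orP [/eqP->|/eqP->]]; [|by rewrite sym|by []].
  case: (eqVneq y u0) => //= hy0. apply/eqP; symmetry.
  apply: (deg2_eq d1 (_ : T u1 u0) e12 h) => //; first by rewrite sym.
  by rewrite eq_sym.
have Nw : forall y, T w y = (y == v).
  by move=> y; apply/idP/eqP => [h|->//]; exact: deg1_eq hw h hwv.
pose T' := modT T u0 w.
have t1 : forall y, T' u0 y = (y == w).
  by move=> y; rewrite /T' /modT eqxx e0w /= andbF /= orbF.
have t2 : forall y, T' w y = (y == v) || (y == u0).
  move=> y; rewrite /T' /modT Nw nw0 eqxx (negbTE nw0) /= andbT.
  by case: (eqVneq y u0) => [->|hy]; rewrite ?eqxx ?orbT // andbT orbF.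
have t3 : forall y, T' u1 y = (y == u2).
  have h10 : (u1 == u0) = false by rewrite eq_sym (negbTE n01).
  have h1w : (u1 == w) = false by rewrite eq_sym (negbTE nw1).
  move=> y; rewrite /T' /modT N1 h10 h1w /= andbT !orbF.
  case: (eqVneq y u0) => [->|hy]; last by rewrite andbT.
  by rewrite ?eqxx /= ?andbF (negbTE n02).
have t4 : forall x y, x != u0 -> x != u1 -> x != w -> T' x y = T x y.
  move=> x y h0 h1 hw'; rewrite /T' /modT h0 (negbTE h0) (negbTE hw') /= andbT !orbF.
  case: (eqVneq y u0) => [->|hy]; last by rewrite andbT.
  by rewrite N0' (negbTE h1) andbF.
have t5 : forall x y, x != u0 -> y != u0 -> T' x y = T x y.
  move=> x y h0 h1; rewrite /T' /modT h0 h1 (negbTE h0) (negbTE h1) /= !andbT.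
  by rewrite !andbF !orbF.
have symT' : symmetric T'.
  move=> x y; rewrite /T' /modT sym.
  by case: (x == u0); case: (y == u0); case: (x == w); case: (y == w); case: (T y x).
have irrT' : irreflexive T'.
  move=> x; rewrite /T' /modT irr /=.
  by case: (eqVneq x u0) => [->|h]; rewrite ?e0w ?andbF.
have D0 : deg T' u0 = 1 := deg_one t1.
have D1 : deg T' u1 = 1 := deg_one t3.
have Dw : deg T' w = 2 := deg_two t2 nv0.
have Dx : forall x, x != u0 -> x != u1 -> x != w -> deg T' x = deg T x.
  by move=> x h0 h1 h2; apply: deg_ext => y; apply: t4.
have hdeg4' : forall x, deg T' x <= 4.
  move=> x. case: (eqVneq x u0) => [->|h0]; first by rewrite D0.
  case: (eqVneq x u1) => [->|h1]; first by rewrite D1.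
  case: (eqVneq x w) => [->|h2]; first by rewrite Dw.
  by rewrite Dx.
have main : forall x y, x != u0 -> y != u0 -> connect T' x y.
  move=> x y hx hy. move/connectP: (conn x y) => [p0 hp0 Ey]. rewrite Ey in hy *.
  case/shortenP: hp0 hy => p' hp' hu' _ hy.
  apply/connectP; exists p' => //.
  have hall : all (predC1 u0) (x :: p').
    apply/allP => z hz /=. apply/negP => /eqP Ez. subst z.
    move: hz; rewrite in_cons => /orP [/eqP E|hz]; first by rewrite E eqxx in hx.
    apply: (deg1_not_interior sym hp' hu' hz _ d0). by rewrite eq_sym.
  have ee : {in predC1 u0 &, T =2 T'}.
    by move=> a b ha hb; rewrite t5.
  by rewrite -(eq_in_path ee hall).
have conn' : connected T'.
  move=> x y. case: (eqVneq x u0) => [->|hx]; case: (eqVneq y u0) => [->|hy].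
  - exact: connect0.
  - apply: connect_trans (connect1 (_ : T' u0 w)) (main w y nw0 hy). by rewrite t1.
  - apply: connect_trans (main x w hx nw0) (connect1 (_ : T' w u0)). by rewrite t2 eqxx orbT.
  - exact: main.
have acyc' : acyclic T'.
  move=> c hu1 hs; apply/negP => hc.
  case: (boolP (u0 \in c)) => h0.
  - case/rot_to: h0 => i s' E.
    have hc' : cycle T' (u0 :: s') by rewrite -E rot_cycle.
    have hu' : uniq (u0 :: s') by rewrite -E rot_uniq.
    have hs' : 3 <= size (u0 :: s') by rewrite -E size_rot.
    case: s' E hc' hu' hs' => [|a [|b s'']] // _ hc' hu' _.
    move: hc' => /= /andP [ha]. rewrite rcons_path => /andP [_ hl].
    rewrite t1 in ha. rewrite symT' t1 /= in hl. move/andP: hl => [_ hl].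
    move: hu' => /= /andP [_ /andP [+ _]].
    by rewrite (eqP ha) -(eqP hl) mem_last.
  - have hall : all (predC1 u0) c by apply/allP => z hz /=; apply: contraNneq h0 => <-.
    have ee : {in predC1 u0 &, T' =2 T} by move=> a b ha hb; rewrite t5.
    have := acyc c hu1 hs. by rewrite -(eq_in_cycle ee hall) hc.
have chQ : ch T [:: w; v].
  rewrite /ch /path_deg2_internal /= !inE nwv hwv hw eqxx /= ?orbT /=.
  by rewrite eqxx orbT /= neq_ltn hv orbT.
have u0np : u0 \notin [:: u1, u2, u3 & r] by move: hu => /andP [].
have chP' : ch T' [:: u1, u2, u3 & r].
  have hall : all (predC1 u0) [:: u1, u2, u3 & r].
    apply/allP => z hz /=. by apply: contraNneq u0np => <-.
  have ee : {in predC1 u0 &, T' =2 T} by move=> a b ha hb; rewrite t5.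
  rewrite /ch /path_deg2_internal (eq_in_path ee hall) D1 /=.
  rewrite (Dx _ nr0 nr1 nrw) neq_ltn dr orbT andbT.
  move: hpdi => /and4P [_ /andP [_ ->] /andP [_ ->] /allP ha] /=.
  have H : forall z, z \in [:: u1, u2, u3 & r] ->
     (z == u1) || (z == last u3 r) || (deg T' z == 2).
    move=> z hz. move: (ha z). rewrite in_cons hz orbT => /(_ isT).
    have -> : (z == u0) = false by apply/negbTE; apply: contraNneq u0np => <-.
    case: (eqVneq z u1) => [->|hz1] //=. case: (eqVneq z (last u3 r)) => [->|hzl] //=.
    case: (eqVneq z w) => [->|hzw]; first by rewrite hw.
    rewrite Dx //. by apply: contraNneq u0np => <-.
  have HA : all (fun z => (z == u1) || (z == last u3 r) || (deg T' z == 2)) [:: u1, u2, u3 & r] by apply/allP.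
  exact: HA.
have nvw : v != w by rewrite eq_sym.
have Dv : deg T' v = deg T v := Dx v nv0 nv1 nvw.
have chQ' : ch T' [:: u0; w; v].
  rewrite /ch /path_deg2_internal /= t1 eqxx t2 eqxx /= D0 Dv Dw !inE e0w.
  rewrite (negbTE nwv) eq_sym (negbTE nv0) /= !orbT /=.
  by rewrite eqxx /= neq_ltn hv orbT.
have segP := canon_seg sym chP.
have segQ := canon_seg sym chQ.
have segP' := canon_seg symT' chP'.
have segQ' := canon_seg symT' chQ'.
have AT_eq : forall s, is_segment T s -> (u0 \in s) || (w \in s) ->
    (s == canon [:: u0, u1, u2, u3 & r]) || (s == canon [:: w; v]).
  move=> s hs /orP [h|h].
    by rewrite (seg_from_leaf sym d0 chP hs h) eqxx.
  by rewrite (seg_from_leaf sym hw chQ hs h) eqxx orbT.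
have notu1 : forall s, is_segment T s -> u0 \notin s -> u1 \notin s.
  move=> s hs h0; apply: contra h0 => h1.
  by apply: (ch_deg2_mem sym (seg_ch hs) h1 d1); rewrite sym.
have notw' : forall s, is_segment T' s -> u0 \notin s -> w \notin s.
  move=> s hs h0; apply: contra h0 => h1.
  by apply: (ch_deg2_mem symT' (seg_ch hs) h1 Dw); rewrite t2 eqxx orbT.
have transfer : forall s, u0 \notin s -> u1 \notin s -> w \notin s ->
    is_segment T s = is_segment T' s.
  move=> s h0 h1 hw'. apply: seg_transfer.
  - move=> a b ha hb. rewrite t4 //.
    + by apply: contraNneq h0 => <-.
    + by apply: contraNneq h1 => <-.
    + by apply: contraNneq hw' => <-.
  - move=> a ha. rewrite Dx //.
    + by apply: contraNneq h0 => <-.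
    + by apply: contraNneq h1 => <-.
    + by apply: contraNneq hw' => <-.
have u0P : u0 \in canon [:: u0, u1, u2, u3 & r] by rewrite mem_canon inE eqxx.
have wQ : w \in canon [:: w; v] by rewrite mem_canon inE eqxx.
have u0Q : u0 \notin canon [:: w; v].
  by rewrite mem_canon !inE e0w eq_sym (negbTE nv0).
have u1P' : u1 \in canon [:: u1, u2, u3 & r] by rewrite mem_canon inE eqxx.
have u0Q' : u0 \in canon [:: u0; w; v] by rewrite mem_canon inE eqxx.
have u0P' : u0 \notin canon [:: u1, u2, u3 & r] by rewrite mem_canon.
case: hseg => S [huS memS sizeS].
pose AT := fun s : seq 'I_n => (u0 \in s) || (w \in s).
have hT'seg : num_segments_eq T' k.
  exists ([seq s <- S | ~~ AT s] ++ [:: canon [:: u1, u2, u3 & r]; canon [:: u0; w; v]]).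
  have Hmem : forall s, (s \in [seq s <- S | ~~ AT s] ++
      [:: canon [:: u1, u2, u3 & r]; canon [:: u0; w; v]]) = is_segment T' s.
    move=> s. rewrite mem_cat mem_filter memS !inE.
    apply/idP/idP.
    - case/orP => [/andP [hA hs]|/orP [/eqP ->|/eqP ->]] //.
      move: hA; rewrite /AT negb_or => /andP [h0 hw'].
      by rewrite -transfer // notu1.
    - move=> hs. case: (boolP (u1 \in s)) => h1.
        by rewrite (seg_from_leaf symT' D1 chP' hs h1) eqxx orbT.
      case: (boolP (u0 \in s)) => h0.
        by rewrite (seg_from_leaf symT' D0 chQ' hs h0) eqxx !orbT.
      have hw' := notw' s hs h0.
      by rewrite /AT (negbTE h0) (negbTE hw') /= (transfer s h0 h1 hw') hs.
  split.
  - rewrite cat_uniq filter_uniq //=.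
    have nP : ~~ (~~ AT (canon [:: u1, u2, u3 & r]) && (canon [:: u1, u2, u3 & r] \in S)).
      apply/negP => /andP [hA hS]. rewrite memS in hS.
      move: hA; rewrite /AT negb_or => /andP [h0 _].
      by move: (notu1 _ hS h0); rewrite u1P'.
    have nPQ : canon [:: u1, u2, u3 & r] != canon [:: u0; w; v].
      by apply: contraNneq u0P' => ->.
    rewrite !mem_filter !inE andbT orbF nPQ andbT negb_or nP /=.
    by rewrite /AT u0Q'.
  - exact Hmem.
  - rewrite size_cat size_filter /=.
    have c2 : count AT S = 2.
      rewrite -size_filter.
      have pe : perm_eq [seq s <- S | AT s] [:: canon [:: u0, u1, u2, u3 & r]; canon [:: w; v]].
        apply: uniq_perm.
        + exact: filter_uniq.
        + rewrite /= inE andbT. by apply: contraNneq u0Q => <-.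
        + move=> z. rewrite mem_filter !inE. apply/idP/idP.
          * move=> /andP [hA hS]. rewrite memS in hS. exact: AT_eq hS hA.
          * case/orP => /eqP ->; first by rewrite /AT u0P memS segP.
            by rewrite /AT wQ orbT memS segQ.
      by rewrite (perm_size pe).
    have cc := count_predC AT S.
    change (count (predC AT) S + 2 = k).
    move: c2 cc sizeS; clear; lia.
have hCT' : CT T' k := conj (conj (And3 (conj symT' irrT') conn' acyc') hdeg4') hT'seg.
have hle := hmax T' hCT'.
have n0w : u0 != w by rewrite eq_sym.
have n1w : u1 != w by rewrite eq_sym.
have n20 : u2 != u0 by rewrite eq_sym.
have n21 : u2 != u1 by rewrite eq_sym.
have n2w : u2 != w by rewrite eq_sym.
have RT0 : Rs T u0 = 2 by rewrite /Rs (sum_if1 _ N0) d0 d1.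
have RT1 : Rs T u1 = 6 by rewrite /Rs (sum_if2 _ n02 N1) d0 d1 d2.
have RTw : Rs T w = deg T v by rewrite /Rs (sum_if1 _ Nw) hw mul1n.
have RT'0 : Rs T' u0 = 2 by rewrite /Rs (sum_if1 _ t1) D0 Dw.
have RT'1 : Rs T' u1 = 2 by rewrite /Rs (sum_if1 _ t3) D1 (Dx u2 n20 n21 n2w) d2.
have RT'w : Rs T' w = 2 * deg T v + 2 by rewrite /Rs (sum_if2 _ nv0 t2) Dw Dv D0.
have ind : forall u a, (if T u a then deg T u else 0) =
    \sum_(y : 'I_n) (if T u y then (if y == a then deg T u else 0) else 0).
  move=> u a0. rewrite (bigD1 a0) //= eqxx big1 ?addn0; first by case: (T u a0).
  by move=> y hy; rewrite (negbTE hy); case: (T u y).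
have pt : forall u, (u != u0) && (u != u1) && (u != w) ->
    Rs T' u + (if T u u1 then deg T u else 0) = Rs T u + (if T u w then deg T u else 0).
  move=> u /andP [/andP [h0 h1] h2].
  rewrite /Rs (Dx u h0 h1 h2) (ind u u1) (ind u w) -!big_split /=.
  apply: eq_bigr => y _. rewrite t4 //.
  case: (T u y) => //.
  case: (eqVneq y u0) => [->|hy0].
    by rewrite D0 d0 (negbTE n01) (negbTE n0w).
  case: (eqVneq y u1) => [->|hy1].
    by rewrite D1 d1 (negbTE n1w) ?eqxx muln1 addn0 muln2 addnn.
  case: (eqVneq y w) => [->|hyw].
    by rewrite Dw hw ?(negbTE nw1) ?eqxx muln1 addn0 muln2 addnn.
  by rewrite Dx // (negbTE hy1) (negbTE hyw).
have Srest : \sum_(u | (u != u0) && (u != u1) && (u != w)) Rs T' u + 2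
    = \sum_(u | (u != u0) && (u != u1) && (u != w)) Rs T u + deg T v.
  have E : \sum_(u | (u != u0) && (u != u1) && (u != w))
      (Rs T' u + (if T u u1 then deg T u else 0)) =
      \sum_(u | (u != u0) && (u != u1) && (u != w))
      (Rs T u + (if T u w then deg T u else 0)) by apply: eq_bigr.
  move: E. rewrite !big_split /=.
  rewrite (sum_one (F := fun u => if T u u1 then deg T u else 0) (a := u2)); last first.
  - move=> u /andP [/andP [h0 h1] h2] hu2. by rewrite sym N1 (negbTE h0) (negbTE hu2).
  - by rewrite n20 n21 n2w.
  rewrite (sum_one (F := fun u => if T u w then deg T u else 0) (a := v)); last first.
  - move=> u _ huv. by rewrite sym Nw (negbTE huv).
  - by rewrite nv0 nv1 nvw.
  by rewrite sym e12 d2 sym hwv.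
have ST := M2_sym sym irr.
have ST' := M2_sym symT' irrT'.
rewrite (sum3 _ n01 n0w n1w) in ST.
rewrite (sum3 _ n01 n0w n1w) in ST'.
rewrite RT0 RT1 RTw in ST. rewrite RT'0 RT'1 RT'w in ST'.
move: ST ST' Srest hle hv. clear. lia.
Qed.
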